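(* Let $(G,\prec)$ be an ordered graph with vertices $a\prec b\prec c\prec d$ such that there is a crossing sequence from $a$ to $c$ and a crossing sequence from $b$ to $d$. Then there is a crossing sequence from $a$ to $d$.
   Context: An ordered graph is a pair $(G,\prec)$ where $G$ is a finite graph and $\prec$ a linear order on $V(G)$. For vertices $p\prec q\prec r\prec s$ with $pr,qs\in E(G)$, we say $pr$ crosses $qs$. For distinct vertices $u\prec v$, a crossing sequence from $u$ to $v$ is a sequence of distinct edges $e_1,\dots,e_k$ such that $u$ is the smaller end of $e_1$, $v$ is the larger end of $e_k$, and $e_i$ crosses $e_{i+1}$ for $1\le i<k$. *)

(* Defs.v *)
From mathcomp Require Import all_boot.
Set Implicit Arguments. Unset Strict Implicit. Unset Printing Implicit Defensive.

(* An ordered graph: vertex set a finType T, a strict linear order [lt] on T,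
   and an adjacency relation [adj] (symmetric, irreflexive). *)
Definition strict_linear_order (T : finType) (lt : rel T) : Prop :=
  irreflexive lt /\ transitive lt /\ (forall x y, x != y -> lt x y || lt y x).

Definition simple_graph (T : finType) (adj : rel T) : Prop :=
  symmetric adj /\ irreflexive adj.

(* An edge is represented as the ordered pair (smaller end, larger end). *)
Definition is_edge (T : finType) (lt adj : rel T) (f : T * T) : bool :=
  lt f.1 f.2 && adj f.1 f.2.

Definition crosses_ord (T : finType) (lt : rel T) (f g : T * T) : bool :=
  [&& lt f.1 g.1, lt g.1 f.2 & lt f.2 g.2].

Definition crosses (T : finType) (lt : rel T) (f g : T * T) : bool :=
  crosses_ord lt f g || crosses_ord lt g f.

Definition crossing_sequence (T : finType) (lt adj : rel T) (u v : T)
    (s : seq (T * T)) : Prop :=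
  exists (e1 : T * T) (s' : seq (T * T)),
    [/\ s = e1 :: s', all (is_edge lt adj) s, uniq s &
        [/\ e1.1 = u, (last e1 s').2 = v & path (crosses lt) e1 s']].

Definition has_crossing_sequence (T : finType) (lt adj : rel T) (u v : T) : Prop :=
  exists s, crossing_sequence lt adj u v s.

(* Main.v *)
Require Import Defs.
From mathcomp Require Import all_boot.
From mathcomp Require Import zify.

Lemma rank_ex (T : finType) (lt : rel T) (Hlt : strict_linear_order lt) :
  exists r : T -> nat, (forall x y, lt x y = (r x < r y)) /\ injective r.
Proof.
case: Hlt => irr [tr tot].
pose r x := #|[pred y | lt y x]|.
have mono : forall x y, lt x y -> r x < r y.
  move=> x y lxy; apply: proper_card; apply/properP; split.
    by apply/subsetP => z; rewrite !inE => lzx; apply: tr lzx lxy.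
  by exists x; rewrite !inE ?irr.
exists r; split.
  move=> x y; apply/idP/idP; first exact: mono.
  move=> h; case: (eqVneq x y) => [exy|nxy]; first by rewrite exy ltnn in h.
  case/orP: (tot _ _ nxy) => // /mono h'.
  by move: (ltn_trans h h'); rewrite ltnn.
move=> x y e; apply/eqP; apply/negPn/negP => nxy.
by case/orP: (tot _ _ nxy) => /mono; rewrite e ltnn.
Qed.

Lemma crossesP {T : finType} {lt : rel T} {r : T -> nat}
  (Hr : forall x y, lt x y = (r x < r y)) f g :
  crosses lt f g <->
  ((r f.1 < r g.1 /\ r g.1 < r f.2 /\ r f.2 < r g.2) \/
   (r g.1 < r f.1 /\ r f.1 < r g.2 /\ r g.2 < r f.2)).
Proof.
rewrite /crosses /crosses_ord !Hr; split.
  by case/orP => /and3P [-> -> ->]; auto.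
by case => [[-> [-> ->]] | [-> [-> ->]]]; rewrite ?orbT.
Qed.

Lemma cover {T : finType} {lt : rel T} {r : T -> nat}
  (Hr : forall x y, lt x y = (r x < r y)) x s x0 :
  path (crosses lt) x0 s -> r x0.1 < r x -> r x < r (last x0 s).2 ->
  exists2 e : T * T, e \in x0 :: s & (r e.1 < r x) && (r x < r e.2).
Proof.
elim: s x0 => [|e2 s IH] x0 /=.
  by move=> _ h1 h2; exists x0; rewrite ?inE ?eqxx ?h1 ?h2.
case/andP => /(crossesP Hr) hc hp h1 h2.
case: (ltnP (r x) (r x0.2)) => hx.
  by exists x0; rewrite ?inE ?eqxx ?h1 ?hx.
have h1' : r e2.1 < r x by lia.
have [e he hh] := IH e2 hp h1' h2.
by exists e => //; rewrite inE he orbT.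
Qed.

Lemma inv {T : finType} {lt : rel T} {r : T -> nat}
  (Hr : forall x y, lt x y = (r x < r y)) g x0 s :
  path (crosses lt) x0 s -> (forall h : T * T, h \in x0 :: s -> ~~ crosses lt g h) ->
  forall h : T * T, h \in x0 :: s ->
    (r g.1 <= r h.1) && (r h.2 <= r g.2) = (r g.1 <= r x0.1) && (r x0.2 <= r g.2).
Proof.
elim: s x0 => [|e2 s IH] x0 /=.
  by move=> _ _ h; rewrite inE => /eqP ->.
case/andP => /(crossesP Hr) hc hp Hn h.
have n2 : ~~ crosses lt g e2 by apply: Hn; rewrite !inE eqxx orbT.
have n0 : ~~ crosses lt g x0 by apply: Hn; rewrite !inE eqxx.
have n2' : ~ ((r g.1 < r e2.1 /\ r e2.1 < r g.2 /\ r g.2 < r e2.2) \/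
   (r e2.1 < r g.1 /\ r g.1 < r e2.2 /\ r e2.2 < r g.2)).
  by move/(crossesP Hr); apply/negP.
have n0' : ~ ((r g.1 < r x0.1 /\ r x0.1 < r g.2 /\ r g.2 < r x0.2) \/
   (r x0.1 < r g.1 /\ r g.1 < r x0.2 /\ r x0.2 < r g.2)).
  by move/(crossesP Hr); apply/negP.
have E : (r g.1 <= r e2.1) && (r e2.2 <= r g.2) = (r g.1 <= r x0.1) && (r x0.2 <= r g.2).
  apply/idP/idP => /andP [u v]; apply/andP; split; lia.
rewrite inE => /orP [/eqP -> | hin] //.
rewrite -E; apply: (IH e2 hp) => //.
by move=> k kin; apply: Hn; rewrite inE kin orbT.
Qed.

Theorem lemma3p1 (T : finType) (lt adj : rel T)
    (Hlt : strict_linear_order lt) (Hadj : simple_graph adj)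
    (a b c d : T) (Hab : lt a b) (Hbc : lt b c) (Hcd : lt c d) :
  has_crossing_sequence lt adj a c ->
  has_crossing_sequence lt adj b d ->
  has_crossing_sequence lt adj a d.
Proof.
move=> [sP [p1 [ps [-> aP uP [hp1 hpl pathP]]]]].
move=> [sQ [q1 [qs [-> aQ uQ [hq1 hql pathQ]]]]].
have [r [Hr rinj]] := rank_ex _ _ Hlt.
have csym : forall f g, crosses lt f g = crosses lt g f.
  by move=> f g; rewrite /crosses orbC.
have key : has (fun e => has (fun g => (e == g) || crosses lt e g) (q1 :: qs)) (p1 :: ps).
  apply/negPn/negP => /hasPn H.
  have hb1 : r p1.1 < r b by rewrite hp1 -Hr.
  have hb2 : r b < r (last p1 ps).2 by rewrite hpl -Hr.
  have hc1 : r q1.1 < r c by rewrite hq1 -Hr.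
  have hc2 : r c < r (last q1 qs).2 by rewrite hql -Hr.
  have [e eP /andP [he1 he2]] := cover Hr b ps p1 pathP hb1 hb2.
  have [g gQ /andP [hg1 hg2]] := cover Hr c qs q1 pathQ hc1 hc2.
  have He : forall h : T * T, h \in q1 :: qs -> ~~ crosses lt e h.
    move=> h hin; move/hasPn: (H e eP) => /(_ h hin); by rewrite negb_or => /andP [].
  have Hg : forall h : T * T, h \in p1 :: ps -> ~~ crosses lt g h.
    move=> h hin; move/hasPn: (H h hin) => /(_ g gQ); rewrite csym.
    by rewrite negb_or => /andP [].
  have nq1 : ~ crosses lt e q1 by apply/negP; apply: He; rewrite inE eqxx.
  rewrite (crossesP Hr) in nq1.
  rewrite hq1 in nq1.
  have i1 : (r e.1 <= r q1.1) && (r q1.2 <= r e.2) by apply/andP; split; rewrite ?hq1; clear -nq1 he1 he2; lia.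
  have /andP [eg1 eg2] : (r e.1 <= r g.1) && (r g.2 <= r e.2).
    by rewrite (inv Hr e q1 qs pathQ He g gQ).
  have np : ~ crosses lt g (last p1 ps) by apply/negP; apply: Hg; exact: mem_last.
  rewrite (crossesP Hr) in np.
  rewrite hpl in np.
  have j1 : (r g.1 <= r (last p1 ps).1) && (r (last p1 ps).2 <= r g.2).
    by apply/andP; split; rewrite ?hpl; clear -np hg1 hg2; lia.
  have /andP [ge1 ge2] : (r g.1 <= r e.1) && (r e.2 <= r g.2).
    by rewrite (inv Hr g p1 ps pathP Hg e eP) -(inv Hr g p1 ps pathP Hg _ (mem_last _ _)).
  have h1 : e.1 = g.1 by apply: rinj; clear -eg1 eg2 ge1 ge2; lia.
  have h2 : e.2 = g.2 by apply: rinj; clear -eg1 eg2 ge1 ge2; lia.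
  have eeg : e = g by rewrite [e]surjective_pairing [g]surjective_pairing h1 h2.
  by move/hasPn: (H e eP) => /(_ g gQ); rewrite eeg eqxx.
case/hasP: key => e eP /hasP [g gQ heg].
pose R := [rel f h : T * T | [&& is_edge lt adj f, is_edge lt adj h & crosses lt f h]].
have pathR : forall x s, all (is_edge lt adj) (x :: s) -> path (crosses lt) x s -> path R x s.
  move=> x s; elim: s x => [|y s IH] x //=.
  case/and3P => ex ey es /andP [cxy hps]; apply/andP; split.
    by apply/and3P; split.
  apply: (IH y) hps; rewrite [all _ _]/=; apply/andP; split; [exact: ey | exact: es].
have cfrom : forall x s y, path R x s -> y \in x :: s -> connect R y (last x s).
  move=> x s; elim: s x => [|z s IH] x y /=.
    by move=> _; rewrite inE => /eqP ->; exact: connect0.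
  case/andP => Rxz hps; rewrite inE => /orP [/eqP -> | yin].
    have := IH z z hps (mem_head _ _).
    move=> h; apply: connect_trans h; exact: connect1.
  exact: IH.
have c1 : connect R p1 e := path_connect (pathR _ _ aP pathP) eP.
have c2 : connect R g (last q1 qs) := cfrom _ _ _ (pathR _ _ aQ pathQ) gQ.
have c3 : connect R e g.
  case/orP: heg => [/eqP -> | ceg]; first exact: connect0.
  apply: connect1; rewrite /= ceg andbT.
  by rewrite (allP aP e eP) (allP aQ g gQ).
have /connectP [p pR plast] := connect_trans (connect_trans c1 c3) c2.
move: plast; case: (shortenP pR) => p' pR' up' _ plast.
have pe : forall x s, path R x s -> all (is_edge lt adj) s.
  move=> x s; elim: s x => // y s IH x /andP [/and3P [_ ey _] /IH hs].
  by rewrite [all _ _]/= ey hs.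
exists (p1 :: p'), p1, p'; split => //.
  by rewrite [all _ _]/= (allP aP p1 (mem_head _ _)) (pe _ _ pR').
split => //; first by rewrite -plast hql.
by apply: sub_path pR' => f h /and3P [].
Qed.
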